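(* Let $(V_1,\dots,V_n)$ be an $n$-tuple of doubly non-commuting isometries on a Hilbert space $H$. For $A\subseteq\{1,\dots,n\}$ put $P_A=\prod_{i\in A}P_i^{\mathrm{iso}}\prod_{i\in A^c}P_i^{\mathrm{uni}}$ and $H_A=P_A(H)$. Then $H_A=\bigcap_{i\in A}H^{\mathrm{iso}}(V_i)\cap\bigcap_{i\in A^c}H^{\mathrm{uni}}(V_i)$, and $H=\bigoplus_{A\subseteq\{1,\dots,n\}}H_A$ is an orthogonal Hilbert direct sum in which every $H_A$ reduces every $V_i$; for all $A$ and $i$, $V_i|_{H_A}$ is a pure isometry if $i\in A$ and unitary if $i\in A^c$. Furthermore, if $L$ is a subspace of $H$ reducing all of $V_1,\dots,V_n$ and $A\subseteq\{1,\dots,n\}$, with $P_L$ the projection onto $L$, the following are equivalent: (1) $V_i|_L$ is a pure isometry for all $i\in A$ and unitary for all $i\in A^c$; (2) $L\subseteq H_A$; (3) $P_LP_A=P_L$.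
   Context: Fix $n\ge1$ and $z_{ij}\in\mathbb T$ ($i\ne j$) with $z_{ji}=\overline{z_{ij}}$; $(V_1,\dots,V_n)$ is doubly non-commuting if the $V_i$ are isometries with $V_i^*V_j=\overline{z_{ij}}V_jV_i^*$ for $i\ne j$. Subspaces are closed, projections orthogonal, $A^c$ is the complement of $A$ in $\{1,\dots,n\}$, empty products are the identity. For an isometry $S$: $H^{\mathrm{iso}}(S)=\bigoplus_{k\ge0}S^k(\ker S^* )$ (orthogonal sum) and $H^{\mathrm{uni}}(S)=\bigcap_{k\ge0}S^k(H)$; $P_i^{\mathrm{iso}},P_i^{\mathrm{uni}}$ are the projections onto $H^{\mathrm{iso}}(V_i),H^{\mathrm{uni}}(V_i)$ (these $2n$ projections commute pairwise, so the order in $P_A$ is irrelevant). For an invariant subspace $L$, $S|_L$ is a pure isometry if $\{0\}$ is the only $S$-invariant subspace of $L$ on which $S$ is unitary. *)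

(* Defs.v *)
From HB Require Import structures.
From mathcomp Require Import all_boot all_order all_algebra.
From mathcomp Require Import reals complex.
Set Implicit Arguments. Unset Strict Implicit. Unset Printing Implicit Defensive.
Import Order.TTheory GRing.Theory Num.Theory.
Local Open Scope ring_scope.

Definition nrm2 (R : realType) (V : lmodType R[i]) (dot : V -> V -> R[i])
  (x : V) : R := complex.Re (dot x x).

Definition converges_to (R : realType) (V : lmodType R[i]) (dot : V -> V -> R[i])
  (u : nat -> V) (l : V) : Prop :=
  forall e : R, 0 < e -> exists N, forall m, (N <= m)%N -> nrm2 dot (u m - l) < e.

Definition cauchy_seq (R : realType) (V : lmodType R[i]) (dot : V -> V -> R[i])
  (u : nat -> V) : Prop :=
  forall e : R, 0 < e -> exists N, forall m k, (N <= m)%N -> (N <= k)%N ->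
    nrm2 dot (u m - u k) < e.

Record hilbert (R : realType) := Hilbert {
  hsort :> lmodType R[i];
  hdot : hsort -> hsort -> R[i];
  hdot_linl : forall (a : R[i]) (x x' y : hsort),
      hdot (a *: x + x') y = a * hdot x y + hdot x' y;
  hdot_sym : forall x y : hsort, hdot y x = (hdot x y)^*;
  hdot_ge0 : forall x : hsort, 0 <= hdot x x;
  hdot_eq0 : forall x : hsort, hdot x x = 0 -> x = 0;
  hcomplete : forall u : nat -> hsort, cauchy_seq hdot u ->
      exists l, converges_to hdot u l
}.

Section HilbertDefs.
Variables (R : realType) (H : hilbert R).

Local Notation "<< x , y >>" := (hdot x y).

(* subspaces (always closed linear subspaces), as predicates on H *)
Definition closure (M : H -> Prop) : H -> Prop :=
  fun x => exists u : nat -> H, (forall k, M (u k)) /\ converges_to (@hdot R H) u x.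

Definition is_subspace (M : H -> Prop) : Prop :=
  [/\ M 0,
      (forall (a : R[i]) x y, M x -> M y -> M (a *: x + y))
    & (forall x, closure M x -> M x)].

Definition subset_of (M N : H -> Prop) : Prop := forall x, M x -> N x.

Definition bounded_linear (T : H -> H) : Prop :=
  (forall (a : R[i]) x y, T (a *: x + y) = a *: T x + T y) /\
  exists C : R, forall x, nrm2 (@hdot R H) (T x) <= C * nrm2 (@hdot R H) x.

Definition is_adjoint (T Ts : H -> H) : Prop :=
  forall x y, << T x, y >> = << x, Ts y >>.

Definition orth_proj (M : H -> Prop) (P : H -> H) : Prop :=
  forall x, M (P x) /\ (forall y, M y -> << x - P x, y >> = 0).

Definition range (T : H -> H) : H -> Prop := fun x => exists y, x = T y.

Definition image (T : H -> H) (M : H -> Prop) : H -> Prop :=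
  fun x => exists y, M y /\ x = T y.

Definition kernel (T : H -> H) : H -> Prop := fun x => T x = 0.

(* H^iso(S) = orthogonal sum of the S^k(ker S^* ), k >= 0, i.e. the closed
   linear span of these (mutually orthogonal) subspaces *)
Definition Hiso (S Ss : H -> H) : H -> Prop :=
  closure (fun x => exists (N : nat) (f : nat -> H),
     (forall k, (k < N)%N -> image (iter k S) (kernel Ss) (f k)) /\
     x = \sum_(k < N) f k).

Definition Huni (S : H -> H) : H -> Prop :=
  fun x => forall k, range (iter k S) x.

Definition invariant (T : H -> H) (M : H -> Prop) : Prop :=
  forall x, M x -> M (T x).

Definition reduces (M : H -> Prop) (T Ts : H -> H) : Prop :=
  invariant T M /\ invariant Ts M.

(* restriction of the isometry S to the invariant subspace M is unitary,
   i.e. S maps M onto M *)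
Definition unitary_on (S : H -> H) (M : H -> Prop) : Prop :=
  invariant S M /\ forall y, M y -> exists x, M x /\ S x = y.

Definition pure_on (S : H -> H) (L : H -> Prop) : Prop :=
  invariant S L /\
  forall M, is_subspace M -> subset_of M L -> unitary_on S M ->
    forall x, M x -> x = 0.

Definition doubly_noncommuting (n : nat) (z : 'I_n -> 'I_n -> R[i])
  (V Vs : 'I_n -> H -> H) : Prop :=
  [/\ forall i j, i != j -> `|z i j| = 1 /\ z j i = (z i j)^*,
      forall i, bounded_linear (V i) /\ is_adjoint (V i) (Vs i),
      forall i x, Vs i (V i x) = x
    & forall i j x, i != j -> Vs i (V j x) = (z i j)^* *: V j (Vs i x)].

Definition PA (n : nat) (Piso Puni : 'I_n -> H -> H) (A : {set 'I_n}) : H -> H :=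
  foldr (fun i f => Piso i \o f) id (enum A) \o
  foldr (fun i f => Puni i \o f) id (enum (~: A)).

End HilbertDefs.

(* Main.v *)
Require Import Defs.
From HB Require Import structures.
From mathcomp Require Import all_boot all_order all_algebra.
From mathcomp Require Import reals complex.
From mathcomp Require Import ring.
Set Implicit Arguments. Unset Strict Implicit. Unset Printing Implicit Defensive.
Import Order.TTheory GRing.Theory Num.Theory.
Local Open Scope ring_scope.
Section Basic.
Variables (R : realType) (H : hilbert R).
Local Notation "<< x , y >>" := (@hdot R H x y).
Implicit Types (x y : H).

Lemma dot0l y : << 0, y >> = 0.
Proof.
have := hdot_linl 1 (0 : H) 0 y; rewrite scaler0 addr0 mul1r => E.
by apply/(addrI (<<0,y>>)); rewrite addr0 -E.
Qed.

Lemma dotDl x x' y : <<x + x', y>> = <<x,y>> + <<x',y>>.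
Proof. by have := hdot_linl 1 x x' y; rewrite scale1r mul1r. Qed.

Lemma dotZl a x y : <<a *: x, y>> = a * <<x,y>>.
Proof. by have := hdot_linl a x 0 y; rewrite !addr0 dot0l addr0. Qed.

Lemma dotNl x y : << - x, y>> = - <<x,y>>.
Proof. by rewrite -scaleN1r dotZl mulN1r. Qed.

Lemma dotBl x x' y : <<x - x', y>> = <<x,y>> - <<x',y>>.
Proof. by rewrite dotDl dotNl. Qed.

Lemma dot0r y : << y, 0 >> = 0.
Proof. by rewrite hdot_sym dot0l conjC0. Qed.

Lemma dotDr x y y' : <<x, y + y'>> = <<x,y>> + <<x,y'>>.
Proof. by rewrite !(hdot_sym _ x) dotDl rmorphD. Qed.

Lemma dotZr a x y : <<x, a *: y>> = a^* * <<x,y>>.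
Proof. by rewrite !(hdot_sym _ x) dotZl rmorphM. Qed.

Lemma dotNr x y : << x, - y>> = - <<x,y>>.
Proof. by rewrite -scaleN1r dotZr rmorphN1 mulN1r. Qed.

Lemma dotBr x y y' : <<x, y - y'>> = <<x,y>> - <<x,y'>>.
Proof. by rewrite dotDr dotNr. Qed.

Lemma dot_suml N (f : 'I_N -> H) y :
  << \sum_(k < N) f k, y >> = \sum_(k < N) << f k, y >>.
Proof.
by elim/big_rec2: _ => [|k a b _ <-]; [exact: dot0l | exact: dotDl].
Qed.

Lemma dot_ext a b : (forall w, << w, a >> = << w, b >>) -> a = b.
Proof.
move=> E; apply/subr0_eq/hdot_eq0.
by rewrite dotBr E subrr.
Qed.

Lemma dot_ext_l a b : (forall w, << a, w >> = << b, w >>) -> a = b.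
Proof.
move=> E; apply/subr0_eq/hdot_eq0.
by rewrite dotBl E subrr.
Qed.

Lemma perp_sym x y : << x, y >> = 0 -> << y, x >> = 0.
Proof. by move=> E; rewrite hdot_sym E conjC0. Qed.

End Basic.
Lemma zm1 (V : zmodType) (a b c : V) : a - b = c - ((b + c) - a).
Proof. by rewrite opprB opprD addrCA addrA addrACA subrr addr0. Qed.
Lemma zm2 (V : zmodType) (a b : V) : b = a + (b - a).
Proof. by rewrite addrC subrK. Qed.
Definition lin_set (R : realType) (H : hilbert R) (M : H -> Prop) :=
  M 0 /\ forall (a : R[i]) x y, M x -> M y -> M (a *: x + y).
Definition perp (R : realType) (H : hilbert R) (S : H -> Prop) : H -> Prop :=
  fun x => forall y, S y -> hdot x y = 0.

Section Proj.
Variables (R : realType) (H : hilbert R).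
Local Notation "<< x , y >>" := (@hdot R H x y).
Implicit Types (x y : H) (M : H -> Prop).

Lemma lin0 M : lin_set M -> M 0. Proof. by case. Qed.
Lemma linZ M a x : lin_set M -> M x -> M (a *: x).
Proof. by case=> h0 hl hx; rewrite -[_ *: _]addr0; apply: hl. Qed.
Lemma linD M x y : lin_set M -> M x -> M y -> M (x + y).
Proof. by case=> h0 hl hx hy; rewrite -[x]scale1r; apply: hl. Qed.
Lemma linN M x : lin_set M -> M x -> M (- x).
Proof. by move=> hM hx; rewrite -scaleN1r; apply: linZ. Qed.
Lemma linB M x y : lin_set M -> M x -> M y -> M (x - y).
Proof. by move=> hM hx hy; apply: linD => //; apply: linN. Qed.

Lemma perp_lin (S : H -> Prop) : lin_set (perp S).
Proof.
split=> [y _|a x y hx hy w hw]; first exact: dot0l.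
by rewrite dotDl dotZl hx // hy // mulr0 addr0.
Qed.

Variables (M : H -> Prop) (P : H -> H).
Hypothesis (hP : orth_proj M P) (hM : lin_set M).

Lemma proj_in x : M (P x). Proof. by case: (hP x). Qed.
Lemma proj_perp x : perp M (x - P x). Proof. by case: (hP x). Qed.

Lemma proj_unique x m r : M m -> perp M r -> x = m + r -> P x = m.
Proof.
move=> hm hr E.
have hd : M (P x - m) by apply: linB => //; apply: proj_in.
have ed : P x - m = r - (x - P x) by rewrite {2}E; apply: zm1.
rewrite ed in hd.
apply/eqP; rewrite -subr_eq0 ed; apply/eqP/hdot_eq0.
by rewrite dotBl hr // proj_perp // subrr.
Qed.

Lemma proj_fix x : M x -> P x = x.
Proof. by move=> hx; apply: (proj_unique (r := 0)) => //[y _|]; [exact: dot0l|rewrite addr0]. Qed.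

Lemma proj_perp0 x : perp M x -> P x = 0.
Proof. by move=> hx; apply: (proj_unique (r := x)) => //; [exact: lin0|rewrite add0r]. Qed.

Lemma proj_lin a x y : P (a *: x + y) = a *: P x + P y.
Proof.
apply: (proj_unique (r := a *: (x - P x) + (y - P y))).
- by case: hM => _ hl; apply: hl; apply: proj_in.
- by move=> w hw; rewrite dotDl dotZl !proj_perp // mulr0 addr0.
- by rewrite scalerBr addrACA -!zm2.
Qed.

Lemma projD x y : P (x + y) = P x + P y.
Proof. by have := proj_lin 1 x y; rewrite !scale1r. Qed.
Lemma projB x y : P (x - y) = P x - P y.
Proof. by have := proj_lin (-1) y x; rewrite !scaleN1r addrC => ->; rewrite addrC. Qed.

Lemma proj_sa x y : << P x, y >> = << x, P y >>.
Proof.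
have e1 : << P x, y >> = << P x, P y >>.
  rewrite -{1}(subrK (P y) y) dotDr.
  by rewrite (perp_sym (proj_perp y (proj_in x))) add0r.
have e2 : << x, P y >> = << P x, P y >>.
  rewrite -{1}(subrK (P x) x) dotDl.
  by rewrite proj_perp ?add0r //; apply: proj_in.
by rewrite e1 e2.
Qed.

Lemma proj_pyth x : << x, x >> = << P x, P x >> + << x - P x, x - P x >>.
Proof.
have h1 := proj_perp x (proj_in x).
set d := x - P x in h1 *.
have -> : << x, x >> = << d + P x, d + P x >> by rewrite /d subrK.
by rewrite dotDl (dotDr d d (P x)) (dotDr (P x) d (P x)) h1 (perp_sym h1) add0r addr0 addrC.
Qed.

Lemma proj_contr x : << P x, P x >> <= << x, x >>.
Proof. by rewrite [X in _ <= X]proj_pyth lerDl hdot_ge0. Qed.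

End Proj.
Section Cont.
Variables (R : realType) (H : hilbert R).
Local Notation "<< x , y >>" := (@hdot R H x y).
Implicit Types (x y : H).

Lemma conjM' (a b : R[i]) : (a * b)^* = a^* * b^*.
Proof. exact: rmorphM. Qed.

Lemma one_plus_pos (Y : R[i]) : 0 <= Y -> 0 < 1 + Y.
Proof. by move=> hY; apply: (lt_le_trans ltr01); rewrite lerDl. Qed.

Lemma cs_key d y : (1 + <<y,y>>)^-1 * `|<<d,y>>|^+2 <= <<d,d>>.
Proof.
have hY := hdot_ge0 y.
have hp := one_plus_pos hY.
have ht : 0 <= (1 + <<y,y>>)^-1 by rewrite invr_ge0 ltW.
have hconj := geC0_conj ht.
pose t := (1 + <<y,y>>)^-1.
pose c := <<d,y>>.
pose w := d - (t * c) *: y.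
have hyd : <<y,d>> = c^* by rewrite hdot_sym.
have E : <<w,w>> = <<d,d>> - t*(c*c^*) - t*(c * c^*) + t*t*(c*c^*)*<<y,y>>.
  rewrite /w dotBl !dotBr !dotZl !dotZr hyd conjM' hconj -/c -/t.
  ring.
have E2 : <<d,d>> - t * (c * c^*) = <<w,w>> + t*t*(c*c^*).
  rewrite E /t; field; exact: lt0r_neq0.
rewrite normCK -subr_ge0 -/t -/c E2.
apply: addr_ge0; first exact: hdot_ge0.
by rewrite -normCK !mulr_ge0.
Qed.

Lemma dot_cont (u : nat -> H) x y : converges_to (@hdot R H) u x ->
  (forall k, <<u k, y>> = 0) -> <<x, y>> = 0.
Proof.
move=> hc hu.
have hY := hdot_ge0 y.
have hp := one_plus_pos hY.
have ht : 0 < (1 + <<y,y>>)^-1 by rewrite invr_gt0.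
pose a := (1 + <<y,y>>)^-1 * `|<<x,y>>|^+2.
have ha : 0 <= a by apply: mulr_ge0; [exact: ltW | exact: exprn_ge0 (normr_ge0 _)].
suff : a = 0.
  move/eqP; rewrite mulf_eq0 (negbTE (lt0r_neq0 ht)) /= expf_eq0 /= normr_eq0.
  by move/eqP.
pose r := complex.Re a.
have ear : (r%:C)%C = a by apply: RRe_real; apply: ger0_real.
have hr : r <= 0.
  rewrite leNgt; apply/negP => hr.
  have [N hN] := hc r hr.
  have := hN N (leqnn N).
  have := cs_key (u N - x) y.
  rewrite dotBl hu sub0r normrN -/a -ear.
  have hd := hdot_ge0 (u N - x).
  rewrite -(RRe_real (ger0_real hd)) lecR /nrm2 => h1 h2.
  by have := le_lt_trans h1 h2; rewrite ltxx.
apply/eqP; rewrite eq_le ha andbT -ear.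
by have : ((r%:C)%C <= ((0:R)%:C)%C) by rewrite lecR.
Qed.

End Cont.
Section Wold.
Variables (R : realType) (H : hilbert R).
Local Notation "<< x , y >>" := (@hdot R H x y).
Implicit Types (x y : H).
Variables (V Vs : H -> H).
Hypothesis hVl : forall (a : R[i]) x y, V (a *: x + y) = a *: V x + V y.
Hypothesis hadj : is_adjoint V Vs.
Hypothesis hiso : forall x, Vs (V x) = x.

Lemma V0 : V 0 = 0.
Proof.
have := hVl 1 0 0; rewrite scaler0 addr0 scale1r => E.
by apply/(addrI (V 0)); rewrite addr0 -E.
Qed.
Lemma VZ a x : V (a *: x) = a *: V x.
Proof. by have := hVl a x 0; rewrite !addr0 V0 addr0. Qed.
Lemma VD x y : V (x + y) = V x + V y.
Proof. by have := hVl 1 x y; rewrite !scale1r. Qed.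
Lemma VB x y : V (x - y) = V x - V y.
Proof. by have := hVl (-1) y x; rewrite !scaleN1r addrC => ->; rewrite addrC. Qed.

Lemma adj' x y : << Vs x, y >> = << x, V y >>.
Proof. by rewrite hdot_sym -hadj -hdot_sym. Qed.

Lemma Vs0 : Vs 0 = 0.
Proof. by apply/hdot_eq0; rewrite adj' dot0l. Qed.

Lemma VsB x y : Vs (x - y) = Vs x - Vs y.
Proof.
apply: dot_ext => w.
by rewrite -hadj !dotBr -!hadj.
Qed.

Lemma isoV x y : << V x, V y >> = << x, y >>.
Proof. by rewrite hadj hiso. Qed.

Lemma iterV0 k : iter k V 0 = 0.
Proof. by elim: k => //= k ->; exact: V0. Qed.
Lemma iterVZ k a x : iter k V (a *: x) = a *: iter k V x.
Proof. by elim: k => //= k ->; exact: VZ. Qed.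
Lemma iterVD k x y : iter k V (x + y) = iter k V x + iter k V y.
Proof. by elim: k => //= k ->; exact: VD. Qed.
Lemma iso_iter k x y : << iter k V x, iter k V y >> = << x, y >>.
Proof. by elim: k => //= k <-; exact: isoV. Qed.

Lemma Huni_lin : lin_set (Huni V).
Proof.
split=> [k|a x y hx hy k]; first by exists 0; rewrite iterV0.
have [u ->] := hx k; have [w ->] := hy k.
by exists (a *: u + w); rewrite iterVD iterVZ.
Qed.

Lemma Hiso_gen m w : Vs w = 0 -> Hiso V Vs (iter m V w).
Proof.
move=> hw.
exists (fun _ => iter m V w); split.
  exists m.+1, (fun j => if j == m then iter m V w else 0); split.
    move=> j _; case: eqP => [->|_]; first by exists w.
    by exists 0; rewrite iterV0; split => //; rewrite /kernel Vs0.
  rewrite big_ord_recr /= eqxx big1 ?add0r // => j _.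
  by rewrite (ltn_eqF (ltn_ord j)).
move=> e he; exists 0%N => k _.
by rewrite subrr /nrm2 dot0l.
Qed.

Lemma perpgen_Huni r :
  (forall m w, Vs w = 0 -> << r, iter m V w >> = 0) -> Huni V r.
Proof.
move=> hr k; elim: k r hr => [|k IH] r hr; first by exists r.
pose q := r - V (Vs r).
have hq : Vs q = 0 by rewrite /q VsB hiso subrr.
have e : r = V (Vs r).
  apply/subr0_eq/hdot_eq0; rewrite -/q {2}/q dotBl.
  by rewrite (hr 0%N q hq) hadj hq dot0r subrr.
have [u hu] : range (iter k V) (Vs r).
  apply: IH => m w hw; rewrite adj'.
  by have := hr m.+1 w hw.
by exists u; rewrite e hu.
Qed.

Lemma Huni_perp_gen m w y : Huni V y -> Vs w = 0 -> << iter m V w, y >> = 0.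
Proof.
move=> hy hw; have [u ->] := hy m.+1.
by rewrite iterSr iso_iter -adj' hw dot0l.
Qed.

Lemma Hiso_perp x : Hiso V Vs x -> perp (Huni V) x.
Proof.
move=> [u [hu hc]] y hy; apply: (dot_cont hc) => k.
have [N [f [hf ->]]] := hu k.
rewrite dot_suml big1 // => j _.
have [w [hw ->]] := hf j (ltn_ord j).
exact: Huni_perp_gen.
Qed.

Variables (Piso Puni : H -> H).
Hypothesis hPiso : orth_proj (Hiso V Vs) Piso.
Hypothesis hPuni : orth_proj (Huni V) Puni.

Lemma perpHiso_Huni r : perp (Hiso V Vs) r -> Huni V r.
Proof. by move=> hr; apply: perpgen_Huni => m w hw; apply: hr; apply: Hiso_gen. Qed.

Lemma Hiso_char x : Hiso V Vs x <-> perp (Huni V) x.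
Proof.
split; first exact: Hiso_perp.
move=> hx.
have hr : Huni V (x - Piso x) by apply: perpHiso_Huni; apply: proj_perp hPiso x.
have hPx : Hiso V Vs (Piso x) := proj_in hPiso x.
suff e : x - Piso x = 0 by rewrite (subr0_eq e).
by apply/hdot_eq0; rewrite {1}dotBl hx // (Hiso_perp hPx) // subrr.
Qed.

Lemma Huni_char x : Huni V x <-> perp (Hiso V Vs) x.
Proof.
split; last exact: perpHiso_Huni.
by move=> hx y hy; apply: perp_sym; apply: Hiso_perp.
Qed.

Lemma Hiso_lin : lin_set (Hiso V Vs).
Proof.
have [h0 hl] := perp_lin (Huni V).
split; first by apply/Hiso_char.
by move=> a x y /Hiso_char hx /Hiso_char hy; apply/Hiso_char; apply: hl.
Qed.

Lemma Hiso_Huni0 x : Hiso V Vs x -> Huni V x -> x = 0.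
Proof. by move=> hi hu; apply: hdot_eq0; apply: Hiso_perp. Qed.

Lemma decomp x : Piso x + Puni x = x.
Proof.
have -> : Puni x = x - Piso x.
  apply: (proj_unique hPuni Huni_lin (r := Piso x)).
  - by apply: perpHiso_Huni; apply: proj_perp hPiso x.
  - by apply: Hiso_perp; exact: (proj_in hPiso x).
  - by rewrite subrK.
by rewrite addrC subrK.
Qed.

Section Pres.
Variables (M : H -> Prop) (PM : H -> H).
Hypothesis hPM : orth_proj M PM.
Hypothesis hM : lin_set M.
Hypothesis hred : reduces M V Vs.

Lemma PM_V w : PM (V w) = V (PM w).
Proof.
case: hred => hV hVs.
apply: (proj_unique hPM hM (r := V (w - PM w))).
- by apply: hV; exact: (proj_in hPM w).
- by move=> y hy; rewrite hadj (proj_perp hPM) //; apply: hVs.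
- by rewrite -VD addrC subrK.
Qed.

Lemma PM_iter k w : PM (iter k V w) = iter k V (PM w).
Proof. by elim: k => //= k <-; exact: PM_V. Qed.

Lemma PM_Huni x : Huni V x -> Huni V (PM x).
Proof. by move=> hx k; have [u ->] := hx k; exists (PM u); rewrite PM_iter. Qed.

Lemma PM_Hiso x : Hiso V Vs x -> Hiso V Vs (PM x).
Proof.
move=> /Hiso_char hx; apply/Hiso_char => y hy.
by rewrite (proj_sa hPM) hx //; apply: PM_Huni.
Qed.

Lemma pres x : M x -> M (Piso x) /\ M (Puni x).
Proof.
move=> hx.
have ea : Piso x - PM (Piso x) = PM (Puni x) - Puni x.
  apply/eqP; rewrite subr_eq addrAC eq_sym subr_eq.
  by rewrite -(projD hPM hM) addrC decomp (proj_fix hPM hM hx).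
have hz : Piso x - PM (Piso x) = 0.
  apply: Hiso_Huni0.
    by apply: (linB Hiso_lin); [exact: (proj_in hPiso x)|apply: PM_Hiso; exact: (proj_in hPiso x)].
  rewrite ea; apply: (linB Huni_lin); [apply: PM_Huni|]; exact: (proj_in hPuni x).
have hia : M (Piso x) by rewrite (subr0_eq hz); exact: (proj_in hPM _).
split => //.
have -> : Puni x = x - Piso x by rewrite -{2}(decomp x) addrAC subrr add0r.
exact: linB.
Qed.

End Pres.

End Wold.
Section Subsp.
Variables (R : realType) (H : hilbert R).
Implicit Types (M N : H -> Prop).

Lemma subspace_lin M : is_subspace M -> lin_set M.
Proof. by case. Qed.

Lemma perp_subspace (S : H -> Prop) : is_subspace (perp S).
Proof.
have [h0 hl] := perp_lin S.
split => // x [u [hu hc]] y hy.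
by apply: (dot_cont hc) => k; apply: hu.
Qed.

Lemma subspace_ext M N : (forall x, M x <-> N x) -> is_subspace N -> is_subspace M.
Proof.
move=> e [h0 hl hc]; split; first by apply/e.
  by move=> a x y /e hx /e hy; apply/e; apply: hl.
move=> x [u [hu hcv]]; apply/e; apply: hc.
by exists u; split => // k; apply/e.
Qed.

Lemma subspace_inter (I : Type) (Ms : I -> H -> Prop) :
  (forall i, is_subspace (Ms i)) -> is_subspace (fun x => forall i, Ms i x).
Proof.
move=> hs; split.
- by move=> i; case: (hs i).
- by move=> a x y hx hy i; case: (hs i) => _ hl _; apply: hl.
- move=> x [u [hu hcv]] i; case: (hs i) => _ _ hc; apply: hc.
  by exists u; split => // k; apply: hu.
Qed.

Lemma subspace_and M N : is_subspace M -> is_subspace N ->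
  is_subspace (fun x => M x /\ N x).
Proof.
move=> [h0 hl hc] [h0' hl' hc']; split => //.
- by move=> a x y [? ?] [? ?]; split; [apply: hl|apply: hl'].
- move=> x [u [hu hcv]]; split; [apply: hc|apply: hc'];
  by exists u; split => // k; case: (hu k).
Qed.

End Subsp.

Definition fold (R : realType) (H : hilbert R) (n : nat) (P : 'I_n -> H -> H)
  (l : seq 'I_n) : H -> H := foldr (fun j f => P j \o f) id l.

Lemma in_cons_r (T : eqType) (j k : T) (l : seq T) : k \in l -> k \in j :: l.
Proof. by move=> h; rewrite inE h orbT. Qed.

Section Fold.
Variables (R : realType) (H : hilbert R) (n : nat).
Local Notation "<< x , y >>" := (@hdot R H x y).

Lemma fold_in (P : 'I_n -> H -> H) (Q : 'I_n -> H -> Prop) l y :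
  (forall j w, j \in l -> Q j (P j w)) ->
  (forall j i w, j \in l -> Q i w -> Q i (P j w)) ->
  forall i, (i \in l -> Q i (fold P l y)) /\ (Q i y -> Q i (fold P l y)).
Proof.
move=> h1 h2 i; elim: l h1 h2 => [|j l IH] h1 h2 //=.
have [IH1 IH2] := IH (fun j w hj => h1 j w (in_cons_r _ hj))
   (fun j i w hj => h2 j i w (in_cons_r _ hj)).
split.
- rewrite inE => /orP [/eqP ->|hi]; first by apply: h1; rewrite mem_head.
  by apply: h2; [rewrite mem_head | apply: IH1].
- by move=> hy; apply: h2; [rewrite mem_head | apply: IH2].
Qed.

Lemma fold_fix (P : 'I_n -> H -> H) l y :
  (forall j, j \in l -> P j y = y) -> fold P l y = y.
Proof.
elim: l => [|j l IH] h //=.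
rewrite IH; first by apply: h; rewrite mem_head.
by move=> k hk; apply: h; exact: in_cons_r.
Qed.

Lemma fold_adj (P : 'I_n -> H -> H) l x w :
  (forall j a, j \in l -> << P j a, w >> = << a, w >>) ->
  << fold P l x, w >> = << x, w >>.
Proof.
elim: l => [|j l IH] h //=.
rewrite h ?mem_head //; apply: IH => k a hk; apply: h; exact: in_cons_r.
Qed.

Lemma fold_contr (P : 'I_n -> H -> H) l x :
  (forall j a, << P j a, P j a >> <= << a, a >>) ->
  << fold P l x, fold P l x >> <= << x, x >>.
Proof.
move=> h; elim: l => [|j l IH] //=.
exact: le_trans (h _ _) IH.
Qed.

Lemma fold_ext (P Q : 'I_n -> H -> H) l x :
  (forall j, j \in l -> P j = Q j) -> fold P l x = fold Q l x.
Proof.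
elim: l => [|j l IH] h //=.
rewrite h ?mem_head //; congr (_ _); apply: IH => k hk; apply: h; exact: in_cons_r.
Qed.

End Fold.
Definition PP (R : realType) (H : hilbert R) (n : nat) (Piso Puni : 'I_n -> H -> H)
  (A : {set 'I_n}) : 'I_n -> H -> H :=
  fun j => if j \in A then Piso j else Puni j.

Lemma fold_cons (R : realType) (H : hilbert R) (n : nat) (P : 'I_n -> H -> H) j l y :
  fold P (j :: l) y = P j (fold P l y).
Proof. by []. Qed.

Section SumFold.
Variables (R : realType) (H : hilbert R) (n : nat) (Piso Puni : 'I_n -> H -> H).
Hypothesis hdec : forall j y, Piso j y + Puni j y = y.

Lemma sum_fold l : uniq l -> forall y,
  \sum_(A : {set 'I_n} | A \subset [set:: l]) fold (PP Piso Puni A) l y = y.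
Proof.
elim: l => [|i l IH] hu y.
  rewrite set_nil (eq_bigl (pred1 set0)) ?big_pred1_eq // => A.
  by rewrite subset0.
case/andP: hu => hil hu.
rewrite set_cons; set S := [set:: l].
have hiS : i \notin S by rewrite inE.
rewrite (bigID (fun A : {set 'I_n} => i \in A)).
have e1 : \sum_(A : {set 'I_n} | (A \subset i |: S) && (i \in A)) fold (PP Piso Puni A) (i :: l) y
    = \sum_(B : {set 'I_n} | B \subset S) Piso i (fold (PP Piso Puni B) l y).
  rewrite (reindex_onto (fun B => i |: B) (fun A => A :\ i)) /=; last first.
    by move=> A /andP [_ hA]; rewrite setD1K.
  apply: eq_big => [B|B hB].
    apply/idP/idP.
      case/andP => /andP [hs _] /eqP he; rewrite -he.
      apply/subsetP => x; rewrite !inE => /andP [hxi hxB].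
      have := subsetP hs x; rewrite !inE hxB => /(_ isT).
      by rewrite (negbTE hxi).
    move=> hB; have hiB : i \notin B by apply: contra hiS; apply: (subsetP hB).
    by rewrite setUS // setU11 setU1K ?eqxx.
  rewrite ?fold_cons /PP setU11; congr (_ _).
  apply: fold_ext => j hj; rewrite in_setU1.
  by have -> : (j == i) = false by apply/eqP => eji; move: hil; rewrite -eji hj.
have e2 : \sum_(A : {set 'I_n} | (A \subset i |: S) && (i \notin A)) fold (PP Piso Puni A) (i :: l) y
    = \sum_(B : {set 'I_n} | B \subset S) Puni i (fold (PP Piso Puni B) l y).
  apply: eq_big => [A|A /andP [_ hA]].
    apply/idP/idP.
      case/andP => hs hiA; apply/subsetP => x hx.
      have := subsetP hs x hx; rewrite in_setU1 => /orP [/eqP exi|] //.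
      by move: hiA; rewrite -exi hx.
    move=> hA; rewrite (subset_trans hA (subsetU1 _ _)) /=.
    by apply: contra hiS; apply: (subsetP hA).
  by rewrite ?fold_cons /PP (negbTE hA).
rewrite e1 e2 -big_split /=.
rewrite -[RHS](IH hu y); apply: eq_bigr => B _; exact: hdec.
Qed.

End SumFold.
Lemma unit_Huni (R : realType) (H : hilbert R) (S : H -> H) (M : H -> Prop) x :
  unitary_on S M -> M x -> Huni S x.
Proof.
move=> [hinv hs] hx k; elim: k x hx => [|k IH] x hx; first by exists x.
have [x0 [hx0 <-]] := hs x hx.
by have [u ->] := IH x0 hx0; exists u.
Qed.

Lemma iter_comm_range (R : realType) (H : hilbert R) (V T : H -> H) (c : R[i]) :
  (forall (a : R[i]) (x y : H), V (a *: x + y) = a *: V x + V y) ->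
  (forall x, T (V x) = c *: V (T x)) ->
  forall k u, exists u', T (iter k V u) = iter k V u'.
Proof.
move=> hVl hT; elim=> [|k IH] u; first by exists (T u).
have [u' hu'] := IH u.
by exists (c *: u'); rewrite /= hT hu' (iterVZ hVl) -(VZ hVl).
Qed.

Section Main.
Variables (R : realType) (H : hilbert R) (n : nat).
Local Notation "<< x , y >>" := (@hdot R H x y).
Variables (z : 'I_n -> 'I_n -> R[i]) (V Vs : 'I_n -> H -> H)
  (Piso Puni : 'I_n -> H -> H).
Hypothesis hdnc : doubly_noncommuting z V Vs.
Hypothesis hPiso : forall i, orth_proj (Hiso (V i) (Vs i)) (Piso i).
Hypothesis hPuni : forall i, orth_proj (Huni (V i)) (Puni i).

Lemma hVl i : forall (a : R[i]) (x y : H), V i (a *: x + y) = a *: V i x + V i y.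
Proof. by case: hdnc => _ h _ _; case: (h i) => [[]]. Qed.
Lemma hadj i : is_adjoint (V i) (Vs i).
Proof. by case: hdnc => _ h _ _; case: (h i). Qed.
Lemma hiso i x : Vs i (V i x) = x.
Proof. by case: hdnc. Qed.
Lemma hcomm i j x : i != j -> Vs i (V j x) = (z i j)^* *: V j (Vs i x).
Proof. by case: hdnc => _ _ _ h; apply: h. Qed.
Lemma hz i j : i != j -> `|z i j| = 1.
Proof. by case: hdnc => h _ _ _ /h []. Qed.

Lemma comm_V i j u : i != j -> V j (V i u) = (z i j)^* *: V i (V j u).
Proof.
move=> hij.
pose c := (z i j)^*.
pose w := V j (V i u).
have hQ : Vs i w = c *: V j u by rewrite /w hcomm // hiso.
rewrite -/w -/c -(VZ (hVl i)) -hQ.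
pose q := w - V i (Vs i w).
have hq : Vs i q = 0 by rewrite /q (VsB (hadj i)) hiso subrr.
apply/subr0_eq/hdot_eq0; rewrite -/q {2}/q dotBl (hadj i) hq dot0r subr0.
rewrite /q dotBr -(adj' (hadj i)) hQ dotZl dotZr /w (isoV (hadj j) (@hiso j)) !(isoV (hadj i) (@hiso i)) (isoV (hadj j) (@hiso j)).
have hc : c * c^* = 1.
  by rewrite -normCK /c norm_conjC hz // expr1n.
by rewrite mulrA hc mul1r subrr.
Qed.

Local Notation Qs A i := (if i \in A then Hiso (V i) (Vs i) else Huni (V i)).

Lemma Huni_inv_V i j : Defs.invariant (V j) (Huni (V i)).
Proof.
move=> y hy k; have [<-|hij] := eqVneq i j.
  by have [u ->] := hy k; exists (V i u); rewrite -iterSr.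
have [u ->] := hy k.
have := iter_comm_range (hVl i) (fun x => comm_V x hij) k u.
by case=> u' ->; exists u'.
Qed.

Lemma Huni_inv_Vs i j : Defs.invariant (Vs j) (Huni (V i)).
Proof.
move=> y hy k; have [<-|hij] := eqVneq i j.
  by have [u ->] := hy k.+1; exists u; rewrite /= hiso.
have [u ->] := hy k.
have hji : j != i by rewrite eq_sym.
have := iter_comm_range (hVl i) (fun x => hcomm x hji) k u.
by case=> u' ->; exists u'.
Qed.

Lemma Hiso_inv_V i j : Defs.invariant (V j) (Hiso (V i) (Vs i)).
Proof.
move=> x /(Hiso_char (hVl i) (hadj i) (@hiso i) (hPiso i)) hx.
apply/(Hiso_char (hVl i) (hadj i) (@hiso i) (hPiso i)) => y hy.
by rewrite (hadj j) hx //; apply: Huni_inv_Vs.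
Qed.

Lemma Hiso_inv_Vs i j : Defs.invariant (Vs j) (Hiso (V i) (Vs i)).
Proof.
move=> x /(Hiso_char (hVl i) (hadj i) (@hiso i) (hPiso i)) hx.
apply/(Hiso_char (hVl i) (hadj i) (@hiso i) (hPiso i)) => y hy.
by rewrite (adj' (hadj j)) hx //; apply: Huni_inv_V.
Qed.

Lemma Q_red (A : {set 'I_n}) i j : reduces (Qs A i) (V j) (Vs j).
Proof.
case: (i \in A); split.
- exact: Hiso_inv_V. - exact: Hiso_inv_Vs.
- exact: Huni_inv_V. - exact: Huni_inv_Vs.
Qed.

Lemma Q_lin (A : {set 'I_n}) i : lin_set (Qs A i).
Proof.
case: (i \in A); [exact: (Hiso_lin (hVl i) (hadj i) (@hiso i) (hPiso i))|exact: Huni_lin (hVl i)].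
Qed.

Lemma Q_proj (A : {set 'I_n}) i : orth_proj (Qs A i) (PP Piso Puni A i).
Proof. by rewrite /PP; case: (i \in A). Qed.

Lemma pres_Q (A : {set 'I_n}) i j (b : bool) w : Qs A i w -> Qs A i ((if b then Piso j else Puni j) w).
Proof.
move=> hw.
have := pres (hVl j) (hadj j) (@hiso j) (hPiso j) (hPuni j) (Q_proj A i) (Q_lin A i) (Q_red A i j) hw.
by case: b => -[].
Qed.

Lemma pres_iso (A : {set 'I_n}) i j w : Qs A i w -> Qs A i (Piso j w).
Proof. exact: (pres_Q j true). Qed.
Lemma pres_uni (A : {set 'I_n}) i j w : Qs A i w -> Qs A i (Puni j w).
Proof. exact: (pres_Q j false). Qed.

Lemma Q_in (A : {set 'I_n}) i w : Qs A i (PP Piso Puni A i w).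
Proof. exact: (proj_in (Q_proj A i)). Qed.

Lemma Q_fix (A : {set 'I_n}) i w : Qs A i w -> PP Piso Puni A i w = w.
Proof. exact: (proj_fix (Q_proj A i) (Q_lin A i)). Qed.

Lemma HA_char (A : {set 'I_n}) x : range (PA Piso Puni A) x <-> forall i, Qs A i x.
Proof.
split.
  case=> y ->; change (forall i, Qs A i (fold Piso (enum A) (fold Puni (enum (~: A)) y))).
  set w := fold Puni (enum (~: A)) y.
  have hw : forall i, i \in ~: A -> Qs A i w.
    move=> i hi; have := fold_in (P := Puni) (Q := fun i => Qs A i) (l := enum (~: A)) y.
    case/(_ _ _ i)=> [j w' hj|j k w' hj hk|h1 _].
    - have := Q_in A j w'; rewrite /PP; move: hj; rewrite mem_enum inE.
      by case: (j \in A).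
    - by apply: pres_uni.
    - by apply: h1; rewrite mem_enum.
  move=> i; have := fold_in (P := Piso) (Q := fun i => Qs A i) (l := enum A) w.
  case/(_ _ _ i)=> [j w' hj|j k w' hj hk|h1 h2].
  - have := Q_in A j w'; rewrite /PP; move: hj; rewrite mem_enum.
    by case: (j \in A).
  - by apply: pres_iso.
  - case hiA : (i \in A).
      have hi : i \in enum A by rewrite mem_enum.
      by have := h1 hi; rewrite hiA.
    have hi : i \in ~: A by rewrite inE hiA.
    by have := h2 (hw i hi); rewrite hiA.
move=> hx; exists x.
change (x = fold Piso (enum A) (fold Puni (enum (~: A)) x)).
have h1 : fold Puni (enum (~: A)) x = x.
  apply: fold_fix => j; rewrite mem_enum inE => hj.
  by have := Q_fix (hx j); rewrite /PP (negbTE hj).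
have h2 : fold Piso (enum A) x = x.
  apply: fold_fix => j; rewrite mem_enum => hj.
  by have := Q_fix (hx j); rewrite /PP hj.
by rewrite h1 h2.
Qed.

Local Notation HA A := (range (PA Piso Puni A)).

Lemma hdec j y : Piso j y + Puni j y = y.
Proof. exact: (decomp (hVl j) (hadj j) (@hiso j) (hPiso j) (hPuni j)). Qed.

Lemma Hiso_sub i : is_subspace (Hiso (V i) (Vs i)).
Proof.
apply: (subspace_ext (Hiso_char (hVl i) (hadj i) (@hiso i) (hPiso i))).
exact: perp_subspace.
Qed.

Lemma Huni_sub i : is_subspace (Huni (V i)).
Proof.
apply: (subspace_ext (Huni_char (hVl i) (hadj i) (@hiso i))).
exact: perp_subspace.
Qed.

Lemma part_sub (A : {set 'I_n}) : is_subspace (HA A).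
Proof.
apply: (subspace_ext (HA_char A)).
apply: (subspace_inter (Ms := fun i => Qs A i)) => i.
case: (i \in A); [exact: Hiso_sub | exact: Huni_sub].
Qed.

Lemma part_orth (A B : {set 'I_n}) x y : A != B -> HA A x -> HA B y -> << x, y >> = 0.
Proof.
move=> hAB /HA_char hx /HA_char hy.
case: (pickP (fun i => (i \in A) != (i \in B))) => [i hi|h]; last first.
  by move/eqP: hAB; case; apply/setP => i; move/negbFE: (h i) => /eqP.
have := hx i; have := hy i; move: hi.
case: (i \in A); case: (i \in B) => // _ h2 h1.
- exact: (Hiso_char (hVl i) (hadj i) (@hiso i) (hPiso i) x).1 h1 y h2.
- apply: perp_sym.
  exact: (Hiso_char (hVl i) (hadj i) (@hiso i) (hPiso i) y).1 h2 x h1.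
Qed.

Lemma part_sum x : exists f : {set 'I_n} -> H,
  (forall A, HA A (f A)) /\ x = \sum_(A : {set 'I_n}) f A.
Proof.
exists (fun A => fold (PP Piso Puni A) (enum 'I_n) x); split.
  move=> A; apply/HA_char => i.
  have := fold_in (P := PP Piso Puni A) (Q := fun i => Qs A i) (l := enum 'I_n) x.
  case/(_ _ _ i) => [j w _|j k w _ hk|h1 _].
  - exact: Q_in.
  - exact: (pres_Q j (j \in A)).
  - by apply: h1; rewrite mem_enum.
have := sum_fold hdec (enum_uniq 'I_n) x.
rewrite (eq_bigl (fun _ => true)) => [->|A] //.
by apply/subsetP => j _; rewrite inE mem_enum.
Qed.

Lemma part_red (A : {set 'I_n}) i : reduces (HA A) (V i) (Vs i).
Proof.
split=> x /HA_char hx; apply/HA_char => k.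
- exact: (Q_red A k i).1 _ (hx k).
- exact: (Q_red A k i).2 _ (hx k).
Qed.

Lemma unit_of_Huni (L : H -> Prop) i : reduces L (V i) (Vs i) ->
  (forall y, L y -> Huni (V i) y) -> unitary_on (V i) L.
Proof.
move=> [h1 h2] hu; split => // y hy.
exists (Vs i y); split; first exact: h2.
by have [u ->] := hu y hy 1%N; rewrite /= hiso.
Qed.

Lemma pure_of_Hiso (L : H -> Prop) i : reduces L (V i) (Vs i) ->
  (forall y, L y -> Hiso (V i) (Vs i) y) -> pure_on (V i) L.
Proof.
move=> [h1 h2] hs; split => // M _ hsub hu y hy.
apply: (Hiso_Huni0 (hadj i) (@hiso i)); first exact: hs (hsub y hy).
exact: unit_Huni hu hy.
Qed.

Lemma part_pure (A : {set 'I_n}) i :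
  if i \in A then pure_on (V i) (HA A) else unitary_on (V i) (HA A).
Proof.
case hiA: (i \in A).
  apply: pure_of_Hiso; first exact: part_red.
  by move=> y /HA_char /(_ i); rewrite hiA.
apply: unit_of_Huni; first exact: part_red.
by move=> y /HA_char /(_ i); rewrite hiA.
Qed.

Section PartL.
Variables (L : H -> Prop) (PL : H -> H) (A : {set 'I_n}).
Hypotheses (hL : is_subspace L) (hred : forall i, reduces L (V i) (Vs i))
  (hPL : orth_proj L PL).

Lemma c1c2 : (forall i, if i \in A then pure_on (V i) L else unitary_on (V i) L) ->
  subset_of L (HA A).
Proof.
move=> h1 x hx; apply/HA_char => i; have := h1 i; case: (i \in A) => [[_ hz0]|hu].
  pose M := fun y => L y /\ Huni (V i) y.
  have hMs : is_subspace M by apply: subspace_and => //; exact: Huni_sub.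
  have hMu : unitary_on (V i) M.
    split.
      move=> y [hl hu]; split; [exact: (hred i).1 | exact: Huni_inv_V].
    move=> y [hl hu]; exists (Vs i y); split.
      split; [exact: (hred i).2 | exact: Huni_inv_Vs].
    by have [u ->] := hu 1%N; rewrite /= hiso.
  have hp := pres (hVl i) (hadj i) (@hiso i) (hPiso i) (hPuni i) hPL (subspace_lin hL) (hred i) hx.
  have e : Puni i x = 0.
    have hsub : subset_of M L by move=> y [].
    apply: (hz0 M hMs hsub hMu); split; first exact: hp.2.
    exact: (proj_in (hPuni i)).
  by rewrite -(hdec i x) e addr0; exact: (proj_in (hPiso i)).
exact: unit_Huni hu hx.
Qed.

Lemma c2c1 : subset_of L (HA A) ->
  (forall i, if i \in A then pure_on (V i) L else unitary_on (V i) L).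
Proof.
move=> h2 i; case hiA: (i \in A).
  apply: pure_of_Hiso => // y hy.
  by have := (HA_char A y).1 (h2 y hy) i; rewrite hiA.
apply: unit_of_Huni => // y hy.
by have := (HA_char A y).1 (h2 y hy) i; rewrite hiA.
Qed.

Lemma c2c3 : subset_of L (HA A) -> (forall x, PL (PA Piso Puni A x) = PL x).
Proof.
move=> h2 x; apply/subr0_eq; rewrite -(projB hPL (subspace_lin hL)).
apply: (proj_perp0 hPL (subspace_lin hL)) => l hl.
have hq := (HA_char A l).1 (h2 l hl).
have e : << PA Piso Puni A x, l >> = << x, l >>.
  change (<< fold Piso (enum A) (fold Puni (enum (~: A)) x), l >> = << x, l >>).
  rewrite !fold_adj // => j a; rewrite mem_enum ?inE => hj.
  - have := hq j; rewrite (negbTE hj) => hu.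
    by rewrite (proj_sa (hPuni j)) (proj_fix (hPuni j) (Huni_lin (hVl j)) hu).
  - have := hq j; rewrite hj => hu.
    by rewrite (proj_sa (hPiso j)) (proj_fix (hPiso j) (Hiso_lin (hVl j) (hadj j) (@hiso j) (hPiso j)) hu).
by rewrite dotBl e subrr.
Qed.

Lemma c3c2 : (forall x, PL (PA Piso Puni A x) = PL x) -> subset_of L (HA A).
Proof.
move=> h3 l hl; exists l.
set w := PA Piso Puni A l.
have hw : PL w = l by rewrite /w h3 (proj_fix hPL (subspace_lin hL) hl).
have hc : << w, w >> <= << l, l >>.
  rewrite /w; change (<< fold Piso (enum A) (fold Puni (enum (~: A)) l),
                        fold Piso (enum A) (fold Puni (enum (~: A)) l) >> <= << l, l >>).
  apply: le_trans (fold_contr _ _ _) (fold_contr _ _ _) => j a.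
  - exact: (proj_contr (hPiso j)).
  - exact: (proj_contr (hPuni j)).
have py := proj_pyth hPL w; rewrite hw in py.
have hd : << w - l, w - l >> = 0.
  apply/eqP; rewrite eq_le hdot_ge0 andbT.
  by move: hc; rewrite py gerDl.
by rewrite (subr0_eq (hdot_eq0 hd)).
Qed.

End PartL.

End Main.

Theorem theorem3p4 (R : realType) (H : hilbert R) (n : nat)
  (z : 'I_n -> 'I_n -> R[i]) (V Vs : 'I_n -> H -> H)
  (Piso Puni : 'I_n -> H -> H) :
  doubly_noncommuting z V Vs ->
  (forall i, orth_proj (Hiso (V i) (Vs i)) (Piso i)) ->
  (forall i, orth_proj (Huni (V i)) (Puni i)) ->
  let HA := fun A : {set 'I_n} => range (PA Piso Puni A) in
  (* description of H_A *)
  (forall A : {set 'I_n}, forall x : H,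
      HA A x <->
      (forall i, if i \in A then Hiso (V i) (Vs i) x else Huni (V i) x)) /\
  (* H = orthogonal Hilbert direct sum of the H_A *)
  (forall A : {set 'I_n}, is_subspace (HA A)) /\
  (forall (A B : {set 'I_n}) (x y : H), A != B -> HA A x -> HA B y ->
      hdot x y = 0) /\
  (forall x : H, exists f : {set 'I_n} -> H,
      (forall A, HA A (f A)) /\ x = \sum_(A : {set 'I_n}) f A) /\
  (* each H_A reduces each V_i *)
  (forall (A : {set 'I_n}) (i : 'I_n), reduces (HA A) (V i) (Vs i)) /\
  (* V_i|H_A is pure for i in A and unitary for i in A^c *)
  (forall (A : {set 'I_n}) (i : 'I_n), if i \in A then pure_on (V i) (HA A) else unitary_on (V i) (HA A)) /\
  (* characterization of reducing subspaces contained in H_A *)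
  (forall (L : H -> Prop) (PL : H -> H) (A : {set 'I_n}),
      is_subspace L -> (forall i, reduces L (V i) (Vs i)) -> orth_proj L PL ->
      [/\ (forall i, if i \in A then pure_on (V i) L else unitary_on (V i) L)
             <-> subset_of L (HA A),
          subset_of L (HA A) <-> (forall x, PL (PA Piso Puni A x) = PL x)
        & (forall x, PL (PA Piso Puni A x) = PL x) <->
             (forall i, if i \in A then pure_on (V i) L else unitary_on (V i) L)]).
Proof.
move=> hdnc hPi hPu HA.
split.
  move=> A x; have := HA_char hdnc hPi hPu A x.
  case=> h1 h2; split => h.
    by move=> i; have := h1 h i; case: (i \in A).
  by apply: h2 => i; have := h i; case: (i \in A).
split; first by move=> A; apply: (part_sub hdnc hPi hPu).
split; first by move=> A B x y; apply: (part_orth hdnc hPi hPu).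
split; first by move=> x; apply: (part_sum hdnc hPi hPu).
split; first by move=> A i; apply: (part_red hdnc hPi hPu).
split; first by move=> A i; apply: (part_pure hdnc hPi hPu).
move=> L PL A hL hred hPL.
have i12 := c1c2 hdnc hPi hPu (A := A) hL hred hPL.
have i21 := c2c1 hdnc hPi hPu (A := A) hred.
have i23 := c2c3 hdnc hPi hPu (A := A) hL hPL.
have i32 := c3c2 hPi hPu (A := A) hL hPL.
split; split => h.
- exact: i12 h.
- exact: i21 h.
- exact: i23 h.
- exact: i32 h.
- exact: i21 (i32 h).
- exact: i23 (i12 h).
Qed.
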